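(* Let $\mathcal G=((V,E),(V_1,V_2,V_\Diamond),\delta,w)$ be a stochastic game and $\varphi$ a bounded prefix-independent objective. Consider the classes of the expected value vector $\mathsf r^*=(\mathbb{E}_v(\varphi))_{v\in V}$, and suppose exactly $m\ge1$ of them contain boundary vertices. Index the classes as $C_1,\dots,C_k$ with values $\bar r_1,\dots,\bar r_k$ so that $C_1,\dots,C_m$ are those containing boundary vertices, in increasing order of value, and $C_{m+1},\dots,C_k$ are those without boundary vertices, in increasing order of value. Let $B_0$ be a positive integer such that each of $\bar r_{m+1},\dots,\bar r_k$ can be written as $p/q$ with integers $p,q$, $0<q\le B_0$. For $1\le i\le m$ fix a boundary vertex $u_i$ of $C_i$ and for $1\le j\le k$ let $p_{i,j}=\sum_{v'\in E(u_i)\cap C_j}\delta(u_i)(v')$. Let $Q_B=(p_{i,j})_{1\le i,j\le m}$, $Q_C=(p_{i,j})_{1\le i\le m,\,m+1\le j\le k}$, $\bar r_C=(\bar r_{m+1},\dots,\bar r_k)^{T}$, $I$ the $m\times m$ identity matrix, and $\alpha$ the least common multiple of the denominators of the $p_{i,j}$ ($1\le i\le m$, $1\le j\le k$). For $1\le i\le m$ let $N_i$ be the determinant of the matrix obtained from $\alpha(I-Q_B)$ by replacing its $i$-th column with the column vector $\alpha Q_C\bar r_C$. Then, written in lowest terms, $N_i$ has denominator at most $B_0^{k-m}\le B_0^{|V|}$.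
   Context: A stochastic game is $\mathcal{G}=((V,E),(V_1,V_2,V_\Diamond),\delta,w)$: a finite directed graph $(V,E)$ in which every vertex $v$ has a nonempty out-neighbour set $E(v)$, a partition of $V$ into Player 1, Player 2 and probabilistic vertices, a function $\delta$ giving each $v\in V_\Diamond$ a rational probability distribution $\delta(v)$ on $E(v)$, positive on every out-neighbour, and payoffs $w:E\to\mathbb{Q}$. Plays are infinite paths; deterministic strategies of Player $i$ map finite prefixes ending in $V_i$ to an out-neighbour of the last vertex; a strategy pair and initial vertex induce a probability measure on plays. An objective $\varphi$ is a Borel-measurable real function on plays; bounded if $|\varphi|\le W_\varphi$ for an integer $W_\varphi$; prefix-independent if plays with a common suffix get equal value. $\mathbb{E}_v(\varphi)=\sup_{\sigma_1}\inf_{\sigma_2}\mathbb{E}^{\sigma_1,\sigma_2}_v[\varphi]=\inf_{\sigma_2}\sup_{\sigma_1}\mathbb{E}^{\sigma_1,\sigma_2}_v[\varphi]$ (Player 1 maximises, Player 2 minimises). For a real vector $\mathsf r$ indexed by $V$, its classes are the maximal nonempty sets of vertices on which $\mathsf r$ is constant (the constant being the class value); a vertex $v$ of class $C$ is a boundary vertex if $v\in V_\Diamond$ and $E(v)\not\subseteq C$. *)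

(* Defs.v *)
From HB Require Import structures.
From mathcomp Require Import all_boot all_order all_algebra.
From mathcomp Require Import all_classical all_reals all_analysis.
Set Implicit Arguments. Unset Strict Implicit. Unset Printing Implicit Defensive.
Import Order.TTheory GRing.Theory Num.Theory.
Local Open Scope classical_set_scope.
Local Open Scope ring_scope.

Inductive owner := Pl1 | Pl2 | Rnd.

Record game (V : finType) := Game {
  gE : rel V;
  gowner : V -> owner;
  gdelta : V -> V -> rat;
  gw : V -> V -> rat;
  gE_nonempty : forall v, exists v', gE v v';
  gdelta_pos : forall v v', gowner v = Rnd -> gE v v' -> (0 < gdelta v v')%R;
  gdelta_sum : forall v, gowner v = Rnd -> (\sum_(v' | gE v v') gdelta v v' = 1)%R }.

Definition playT (V : finType) (v0 : V) : Type := nat -> V.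
HB.instance Definition _ (V : finType) (v0 : V) := Choice.on (@playT V v0).
HB.instance Definition _ (V : finType) (v0 : V) :=
  isPointed.Build (@playT V v0) (fun _ => v0).

Section Game.
Variables (R : realType) (V : finType) (G : game V).
Local Notation playT := (@playT V).

Definition is_play (rho : nat -> V) := forall n, gE G (rho n) (rho n.+1).

Definition cyl (v0 : V) (s : seq V) : set (playT v0) :=
  [set rho | map rho (iota 0 (size s)) = s].
Arguments cyl : clear implicits.
Definition cylinders (v0 : V) : set (set (playT v0)) := range (cyl v0).
Arguments cylinders : clear implicits.

Definition cylT (v0 : V) := g_sigma_algebraType (cylinders v0).
Arguments cylT : clear implicits.

(* deterministic strategies: sigma h x = successor chosen at the prefix
   rcons h x (h = history strictly before the current vertex x) *)
Definition strategy := seq V -> V -> V.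
Definition is_strategy (p : owner) (s : strategy) :=
  forall h x, gowner G x = p -> gE G x (s h x).

Definition trans (s1 s2 : strategy) (h : seq V) (x y : V) : R :=
  match gowner G x with
  | Pl1 => (y == s1 h x)%:R
  | Pl2 => (y == s2 h x)%:R
  | Rnd => if gE G x y then ratr (gdelta G x y) else 0
  end.

Fixpoint pathprob (s1 s2 : strategy) (h : seq V) (x : V) (s : seq V) : R :=
  match s with
  | [::] => 1
  | y :: t => trans s1 s2 h x y * pathprob s1 s2 (rcons h x) y t
  end.

Definition prefprob (s1 s2 : strategy) (v : V) (s : seq V) : R :=
  match s with
  | [::] => 1
  | x :: t => (x == v)%:R * pathprob s1 s2 [::] x t
  end.

Definition induced (s1 s2 : strategy) (v : V) (P : probability (cylT v) R) :=
  forall s, P (cyl v s) = (prefprob s1 s2 v s)%:E.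

(* E^{s1,s2}_v [phi] (the induced measure is unique) *)
Definition expect (phi : (nat -> V) -> R) (s1 s2 : strategy) (v : V) : \bar R :=
  ereal_sup [set (\int[P]_x (phi x)%:E)%E | P in @induced s1 s2 v].

Definition game_value (phi : (nat -> V) -> R) (v : V) : \bar R :=
  ereal_sup [set ereal_inf [set expect phi s1 s2 v | s2 in is_strategy Pl2]
            | s1 in is_strategy Pl1].

Definition objective (phi : (nat -> V) -> R) :=
  forall v0 : V, measurable_fun [set: cylT v0] (phi : cylT v0 -> R).
Definition bounded_obj (phi : (nat -> V) -> R) :=
  exists W : nat, forall rho, is_play rho -> `|phi rho| <= W%:R.
Definition prefix_independent (phi : (nat -> V) -> R) :=
  forall rho rho' (i j : nat), is_play rho -> is_play rho' ->
    (forall n, rho (i + n)%N = rho' (j + n)%N) -> phi rho = phi rho'.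

Definition is_boundary (r : V -> R) (v : V) :=
  gowner G v = Rnd /\ exists v', gE G v v' /\ r v' <> r v.

Definition pcoef (r : V -> R) (u : V) (c : R) : rat :=
  (\sum_(v' | gE G u v' && (r v' == c)) gdelta G u v')%R.

End Game.

(* Main.v *)
Require Import Defs.
From HB Require Import structures.
From mathcomp Require Import all_boot all_order all_algebra.
From mathcomp Require Import all_classical all_reals all_analysis.
Import Order.TTheory GRing.Theory Num.Theory.
Local Open Scope ring_scope.



Lemma det_int_rat n (M : 'M[rat]_n) :
  (forall a b, M a b \is a Num.int) -> \det M \is a Num.int.
Proof.
move=> H; rewrite /determinant; apply: rpred_sum => s _.
apply: rpredM; first by rewrite -signr_odd; case: (odd _); rewrite ?expr0 ?expr1 ?rpredN1 ?rpred1.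
by apply: rpred_prod => j _; apply: H.
Qed.

Lemma denq_le_mul (x : rat) (D : nat) : (0 < D)%N ->
  (D%:R * x) \is a Num.int -> denq x <= D%:Z.
Proof.
move=> D0 /intrP [z Hz].
have E : numq x * D%:Z = z * denq x.
  apply: (@intr_inj rat); rewrite !intrM numqE -Hz -mulrA [_%:~R * _]mulrC mulrA.
  by rewrite [x * _]mulrC.
have : (`|denq x| %| `|numq x| * D)%N.
  by rewrite -[D]/(`|D%:Z|%N) -abszM E abszM dvdn_mull.
rewrite Gauss_dvdr; last by rewrite coprime_sym coprime_num_den.
move=> /dvdn_leq -/(_ D0); rewrite -lez_nat absz_denq //.
Qed.

Lemma int_den_mul (a : nat) (x : rat) : (`|denq x| %| a)%N -> a%:R * x \is a Num.int.
Proof.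
case/dvdnP=> k ->; rewrite natrM -mulrA.
have -> : (`|denq x|%N)%:R * x = (numq x)%:~R.
  by rewrite numqE mulrC; congr (_ * _); rewrite -[in RHS]absz_denq.
by apply: rpredM; [apply: rpred_nat_num; apply: natr_nat | apply: intr_int].
Qed.

Lemma int_frac_mul (a d : nat) (p : int) : (0 < d)%N -> (d %| a)%N ->
  a%:R * (p%:~R / d%:R : rat) \is a Num.int.
Proof.
move=> d0 /dvdnP [k ->]; rewrite natrM mulrCA -mulrA mulrCA mulfV ?mulr1.
  by apply: rpredM; [apply: rpred_nat_num; apply: natr_nat | apply: intr_int].
by rewrite pnatr_eq0 -lt0n.
Qed.

Theorem proposition14 (R : realType) (V : finType) (G : game V)
  (phi : (nat -> V) -> R)
  (Hphi : objective phi) (Hbd : bounded_obj G phi)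
  (Hpi : prefix_independent G phi)
  (r : V -> R) (Hr : forall v, (r v)%:E = game_value G phi v)
  (m n : nat) (rB : 'I_m -> R) (rC : 'I_n -> R)
  (Hm : (0 < m)%N)
  (HBcls : forall i, exists v, r v = rB i /\ is_boundary G r v)
  (HCcls : forall j, exists v, r v = rC j)
  (HCnb : forall j v, r v = rC j -> ~ is_boundary G r v)
  (Hcover : forall v, (exists i, r v = rB i) \/ (exists j, r v = rC j))
  (HBinc : forall i j : 'I_m, (i < j)%N -> rB i < rB j)
  (HCinc : forall i j : 'I_n, (i < j)%N -> rC i < rC j)
  (B0 : nat) (HB0 : (0 < B0)%N)
  (HrC : forall j, exists (p : int) (q : nat),
           (0 < q <= B0)%N /\ rC j = p%:~R / q%:R)
  (u : 'I_m -> V) (Hu : forall i, is_boundary G r (u i) /\ r (u i) = rB i) :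
  let QB : 'M[rat]_m := \matrix_(i, j) pcoef G r (u i) (rB j) in
  let QC : 'M[rat]_(m, n) := \matrix_(i, j) pcoef G r (u i) (rC j) in
  let alpha : nat :=
    lcmn (\big[lcmn/1%N]_(i < m) \big[lcmn/1%N]_(j < m) `|denq (QB i j)|%N)
         (\big[lcmn/1%N]_(i < m) \big[lcmn/1%N]_(j < n) `|denq (QC i j)|%N) in
  let A : 'M[R]_m := alpha%:R *: (1%:M - map_mx ratr QB) in
  let c : 'cV[R]_m := alpha%:R *: (map_mx ratr QC *m \col_j rC j) in
  forall i : 'I_m,
    exists q : rat,
      \det (\matrix_(a, b) if b == i then c a ord0 else A a b) = ratr q /\
      (denq q <= (B0 ^ n)%N%:Z) /\ (B0 ^ n <= B0 ^ #|V|)%N.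
Proof.
move=> QB QC alpha A c i.
have [fp Hfp] := choice HrC.
have [fq Hfq] := choice Hfp.
pose rq := fun j => ((fp j)%:~R / (fq j)%:R : rat).
have HrCq : forall j, rC j = ratr (rq j).
  by move=> j; rewrite (Hfq j).2 /rq fmorph_div rmorph_int rmorph_nat.
pose A' : 'M[rat]_m := alpha%:R *: (1%:M - QB).
pose M' : 'M[rat]_m := \matrix_(a, b) if b == i
   then alpha%:R * \sum_j QC a j * rq j else A' a b.
have HM : (\matrix_(a,b) if b == i then c a ord0 else A a b) = map_mx ratr M'.
  apply/matrixP => a b; rewrite /c /A /M' /A' !mxE; case: eqP => _.
    rewrite rmorphM rmorph_nat rmorph_sum; congr (_ * _).
    by apply: eq_bigr => j _; rewrite !mxE HrCq rmorphM.
  by rewrite rmorphM rmorph_nat rmorphB rmorph_nat.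
have alphaB : forall a b, (`|denq (QB a b)| %| alpha)%N.
  move=> a b; apply: dvdn_trans (dvdn_lcml _ _).
  apply: (biglcmn_sup a) => //; exact: (biglcmn_sup b).
have alphaC : forall a b, (`|denq (QC a b)| %| alpha)%N.
  move=> a b; apply: dvdn_trans (dvdn_lcmr _ _).
  apply: (biglcmn_sup a) => //; exact: (biglcmn_sup b).
exists (\det M'); split; first by rewrite HM det_map_mx.
split.
  pose D := (\prod_(j < n) fq j)%N.
  have D0 : (0 < D)%N by apply: prodn_gt0 => j; case/andP: (Hfq j).1.
  have Hint : (D%:R * \det M') \is a Num.int.
    rewrite (expand_det_col M' i) mulr_sumr; apply: rpred_sum => a _.
    rewrite mulrA; apply: rpredM.
      rewrite mxE eqxx mulrCA !mulr_sumr; apply: rpred_sum => j _.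
      rewrite (mulrCA D%:R).
      rewrite mulrA; apply: rpredM; first exact: int_den_mul.
      apply: int_frac_mul; first by case/andP: (Hfq j).1.
      by rewrite /D (bigD1 j) //= dvdn_mulr.
    rewrite /cofactor; apply: rpredM.
      by rewrite -signr_odd; case: (odd _); rewrite ?expr0 ?expr1 ?rpredN1 ?rpred1.
    apply: det_int_rat => x y; rewrite !mxE.
    have -> : (lift i y == i) = false by rewrite eq_sym (negbTE (neq_lift _ _)).
    rewrite mulrBr; apply: rpredB; last by have := @int_den_mul _ _ (alphaB (lift a x) (lift i y)); rewrite /QB mxE.
    by apply: rpredM; apply: rpred_nat_num; apply: natr_nat.
  apply: (le_trans (@denq_le_mul _ _ D0 Hint)).
  rewrite lez_nat /D; apply: leq_trans (leq_prod (E2 := fun _ => B0) _) _.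
    by move=> j _; case/andP: (Hfq j).1.
  by rewrite prod_nat_const card_ord.
have [w Hw] := choice HCcls.
have winj : injective w.
  move=> j1 j2 E; have E' : rC j1 = rC j2 by rewrite -!Hw E.
  apply: val_inj; case: (ltngtP j1 j2) => // h.
    by have := HCinc _ _ h; rewrite E' ltxx.
  by have := HCinc _ _ h; rewrite E' ltxx.
have := leq_card w winj; rewrite card_ord => nV.
case: B0 HB0 {HrC Hfp Hfq} => // b _.
by rewrite leq_pexp2l.
Qed.
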